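(* Let $k\in\mathbb{N}$. (a) Let $P\in\mathbb{C}[x]$. There exists $Q\in\mathbb{C}[x]$ such that $P,Q$ satisfy (i)–(iii) below if and only if $\deg P\le k$, $P$ has parity $(k\bmod 2)$, and (iv.a) $|P(x)|\le 1$ for all $x\in[-1,1]$; (iv.b) $|P(x)|\ge 1$ for all $x\in(-\infty,-1]\cup[1,\infty)$; (iv.c) if $k$ is even, then $P(ix)P^*(ix)\ge 1$ for all $x\in\mathbb{R}$. (b) Let $Q\in\mathbb{C}[x]$. There exists $P\in\mathbb{C}[x]$ such that $P,Q$ satisfy (i)–(iii) if and only if $\deg Q\le k-1$, $Q$ has parity $(k-1\bmod 2)$, and (v.a) $\sqrt{1-x^2}\,|Q(x)|\le 1$ for all $x\in[-1,1]$; (v.b) if $k$ is odd, then $(1+x^2)Q(ix)Q^*(ix)\ge 1$ for all $x\in\mathbb{R}$. Here the conditions are: (i) $\deg P\le k$, $\deg Q\le k-1$; (ii) $P$ has parity $(k\bmod 2)$ and $Q$ has parity $(k-1\bmod 2)$; (iii) $|P(x)|^2+(1-x^2)|Q(x)|^2=1$ for all $x\in[-1,1]$.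
   Context: For $P(x)=\sum_j a_jx^j\in\mathbb{C}[x]$, $P^*(x):=\sum_j \overline{a_j}x^j$. A polynomial is even (odd) if all its odd-power (even-power) coefficients vanish; the zero polynomial is both. $P$ has parity $z\in\mathbb{Z}$ if $z$ is even and $P$ is even, or $z$ is odd and $P$ is odd. *)

(* Defs.v *)
(* The complex field C is modelled as an arbitrary
   numClosedFieldType (algebraically closed field with conjugation/norm). *)
From HB Require Import structures.
From mathcomp Require Import all_boot all_order all_algebra.
Set Implicit Arguments. Unset Strict Implicit. Unset Printing Implicit Defensive.
Import Order.TTheory GRing.Theory Num.Theory.
Local Open Scope ring_scope.

Definition conjp (C : numClosedFieldType) (P : {poly C}) : {poly C} :=
  map_poly Num.conj P.

Definition even_poly_p (C : numClosedFieldType) (P : {poly C}) : Prop :=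
  forall j : nat, odd j -> P`_j = 0.

Definition odd_poly_p (C : numClosedFieldType) (P : {poly C}) : Prop :=
  forall j : nat, ~~ odd j -> P`_j = 0.

Definition has_parity (C : numClosedFieldType) (P : {poly C}) (z : int) : Prop :=
  if odd `|z|%N then odd_poly_p P else even_poly_p P.

Definition QSP_cond (C : numClosedFieldType) (k : nat) (P Q : {poly C}) : Prop :=
  [/\ ((size P <= k.+1)%N /\ (size Q <= k)%N),
      (has_parity P k%:Z /\ has_parity Q (k%:Z - 1)) 
    & (forall x : C, x \is Num.real -> -1 <= x <= 1 ->
        `|P.[x]| ^+ 2 + (1 - x ^+ 2) * `|Q.[x]| ^+ 2 = 1)].

(* Main.v *)
Require Import Defs.
From HB Require Import structures.
From mathcomp Require Import all_boot all_order all_algebra.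
From mathcomp Require Import zify ring.
Import Order.TTheory GRing.Theory Num.Theory.
Local Open Scope ring_scope.

Lemma poly_zero_inv {C : numClosedFieldType} (p : {poly C}) :
  (forall n : nat, p.[(n.+1%:R)^-1] = 0) -> p = 0.
Proof.
move=> H; apply/eqP; apply/negPn/negP => p0.
set rs := [seq (i.+1%:R)^-1 | i <- iota 0 (size p)] : seq C.
have Ha : all (root p) rs by apply/allP => x /mapP [i _ ->]; apply/rootP.
have Hu : uniq rs.
  rewrite map_inj_uniq ?iota_uniq // => i j /invr_inj /eqP.
  by rewrite eqr_nat eqSS => /eqP.
by have := max_poly_roots p0 Ha Hu; rewrite size_map size_iota ltnn.
Qed.

Lemma horner_bound {C : numClosedFieldType} (p : {poly C}) (y K : C) :
  0 <= K -> `|y| <= K -> `|p.[y]| <= \sum_(i < size p) `|p`_i| * K ^+ i.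
Proof.
move=> K0 yK; rewrite horner_coef; apply: le_trans (ler_norm_sum _ _ _) _.
apply: ler_sum => i _; rewrite normrM normrX; apply: ler_wpM2l => //.
by apply: lerXn2r => //; rewrite ?nnegrE.
Qed.

Lemma poly_cont {C : numClosedFieldType} (h : {poly C}) (z c : C) : 0 < c ->
  exists t0, 0 < t0 /\ forall t, `|t| <= t0 -> `|h.[z + t] - h.[z]| < c.
Proof.
move=> c0.
have : root (h - h.[z]%:P) z by rewrite rootE hornerD hornerN hornerC subrr.
case/factor_theorem => R HR.
set M := \sum_(i < size R) `|R`_i| * (`|z| + 1) ^+ i.
have M0 : 0 <= M by apply: sumr_ge0 => i _; rewrite mulr_ge0 // exprn_ge0 // addr_ge0.
have d0 : 0 < c + M + 1 by rewrite -addrA ltr_wpDr // addr_ge0.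
exists (c / (c + M + 1)); split; first by rewrite divr_gt0.
move=> t ht.
have t1 : `|t| <= 1.
  apply: le_trans ht _; rewrite ler_pdivrMr // mul1r -addrA lerDl addr_ge0 //.
have -> : h.[z + t] - h.[z] = R.[z + t] * t.
  have := congr1 (fun q => q.[z + t]) HR => /=.
  rewrite hornerD hornerN hornerC hornerM hornerXsubC => ->; congr (_ * _); by rewrite addrAC subrr add0r.
rewrite normrM; apply: (le_lt_trans (y := M * (c / (c + M + 1)))).
  apply: ler_pM => //.
  apply: horner_bound; first by rewrite addr_ge0.
  by apply: le_trans (ler_normD _ _) _; apply: lerD.
rewrite mulrCA -[ltRHS]mulr1 ltr_pM2l // ltr_pdivrMr // mul1r.
by rewrite -addrA addrCA ltrDl addr_gt0.
Qed.

Lemma conjp_hornerR {C : numClosedFieldType} (p : {poly C}) x :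
  x \is Num.real -> (conjp p).[x] = (p.[x])^*.
Proof. by move=> xr; rewrite -{1}(conj_Creal xr) /conjp horner_map. Qed.

Lemma inv_real {C : numClosedFieldType} (n : nat) : (n.+1%:R : C)^-1 \is Num.real.
Proof. by rewrite rpredV realn. Qed.

Lemma avoid {C : numClosedFieldType} (b : {poly C}) (z t0 : C) :
  b != 0 -> 0 < t0 -> exists t, [/\ 0 < t, t <= t0 & b.[z + t] != 0].
Proof.
move=> b0 t00.
set rs := [seq z + t0 / (i.+1)%:R | i <- iota 0 (size b)].
case: (boolP (all (root b) rs)) => Ha.
  have Hu : uniq rs.
    rewrite map_inj_uniq ?iota_uniq // => i j /addrI /mulfI.
    move=> /(_ (lt0r_neq0 t00)) /invr_inj /eqP.
    by rewrite eqr_nat eqSS => /eqP.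
  by have := max_poly_roots b0 Ha Hu; rewrite size_map size_iota ltnn.
move: Ha => /allPn [x /mapP [i _ ->]] Hr.
exists (t0 / i.+1%:R); split => //; first by rewrite divr_gt0.
by rewrite ler_pdivrMr // ler_peMr ?ler1n ?ltW.
Qed.

Lemma realvalued_conj {C : numClosedFieldType} (f : {poly C}) :
  (forall y, y \is Num.real -> f.[y] \is Num.real) -> conjp f = f.
Proof.
move=> H; apply/eqP; rewrite -subr_eq0; apply/eqP; apply: poly_zero_inv => n.
have yr := @inv_real C n.
by rewrite hornerD hornerN conjp_hornerR // conj_Creal ?subrr // H.
Qed.

Lemma ext_nonneg {C : numClosedFieldType} (b g : {poly C}) : b != 0 ->
  (forall y, y \is Num.real -> b.[y] != 0 -> 0 <= g.[y]) ->
  forall y, y \is Num.real -> 0 <= g.[y].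
Proof.
move=> b0 H.
have gc : conjp g = g.
  apply/eqP; rewrite -subr_eq0; apply/eqP.
  have : b * (conjp g - g) = 0.
    apply: poly_zero_inv => n; have yr := @inv_real C n.
    rewrite hornerM hornerD hornerN conjp_hornerR //.
    case: (eqVneq b.[n.+1%:R^-1] 0) => [->|bn]; first by rewrite mul0r.
    by rewrite geC0_conj ?subrr ?mulr0 // H.
  by move/eqP; rewrite mulf_eq0 (negbTE b0) => /eqP.
have greal : forall y, y \is Num.real -> g.[y] \is Num.real.
  by move=> y yr; rewrite CrealE -conjp_hornerR // gc.
move=> y yr; case: (boolP (0 <= g.[y])) => // Hn; exfalso.
have gn : g.[y] < 0 by rewrite real_ltNge ?greal.
have gn2 : 0 < - g.[y] by rewrite oppr_gt0.
have [t0 [t00 Ht]] := poly_cont g y _ gn2.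
have [t [t0' tt0 bt]] := @avoid _ b y t0 b0 t00.
have yt : y + t \is Num.real by rewrite rpredD // gtr0_real.
have := Ht t; rewrite gtr0_norm // => /(_ tt0) H1; have := real_ltr_normlW (rpredB (greal _ yt) (greal _ yr)) H1.
rewrite ltrBlDr addNr => H2.
by have := le_lt_trans (H _ yt bt) H2; rewrite ltxx.
Qed.
Lemma conjp_horner {C : numClosedFieldType} (p : {poly C}) x :
  (conjp p).[x^*] = (p.[x])^*.
Proof. by rewrite /conjp horner_map. Qed.
Lemma size_conjp {C : numClosedFieldType} (p : {poly C}) : size (conjp p) = size p.
Proof. by rewrite /conjp size_map_poly. Qed.

Lemma conjpM {C : numClosedFieldType} (p q : {poly C}) : conjp (p * q) = conjp p * conjp q.
Proof. by rewrite /conjp rmorphM. Qed.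
Lemma conjpD {C : numClosedFieldType} (p q : {poly C}) : conjp (p + q) = conjp p + conjp q.
Proof. by rewrite /conjp rmorphD. Qed.
Lemma conjpB {C : numClosedFieldType} (p q : {poly C}) : conjp (p - q) = conjp p - conjp q.
Proof. by rewrite /conjp rmorphB. Qed.
Lemma conjpX {C : numClosedFieldType} : conjp ('X : {poly C}) = 'X.
Proof. by rewrite /conjp map_polyX. Qed.
Lemma conjpC {C : numClosedFieldType} (c : C) : conjp c%:P = (c^*)%:P.
Proof. by rewrite /conjp map_polyC. Qed.
Lemma conjpXn {C : numClosedFieldType} n : conjp ('X^n : {poly C}) = 'X^n.
Proof. by rewrite /conjp map_polyXn. Qed.
Lemma conjp_comp {C : numClosedFieldType} (p q : {poly C}) : conjp (p \Po q) = conjp p \Po conjp q.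
Proof. by rewrite /conjp map_comp_poly. Qed.
Lemma conjpK {C : numClosedFieldType} (p : {poly C}) : conjp (conjp p) = p.
Proof. by apply/polyP => i; rewrite /conjp !coef_map /= conjCK. Qed.

Lemma conjpXsubC {C : numClosedFieldType} (z : C) : conjp ('X - z%:P) = 'X - (z^*)%:P.
Proof. by rewrite conjpB conjpX conjpC. Qed.

Lemma FR {C : numClosedFieldType} (f : {poly C}) :
  (forall y, y \is Num.real -> 0 <= f.[y]) -> exists g, f = g * conjp g.
Proof.
move: {2}(size f) (leqnn (size f)) => n; elim: n f => [|n IH] f Hs Hf.
  move: Hs; rewrite leqn0 size_poly_eq0 => /eqP ->; exists 0; by rewrite mul0r.
case: (leqP (size f) 1) => Hs1.
  have -> := size1_polyC Hs1.
  have c0 : 0 <= f`_0 by rewrite -horner_coef0 Hf // real0.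
  exists (sqrtC f`_0)%:P; rewrite conjpC geC0_conj ?sqrtC_ge0 //.
  by rewrite -polyCM -expr2 sqrtCK.
have fr : forall y, y \is Num.real -> f.[y] \is Num.real by move=> y /Hf /ger0_real.
have fc := @realvalued_conj _ f fr.
have f0 : f != 0 by rewrite -size_poly_eq0 -lt0n (ltn_trans _ Hs1).
have [z /factor_theorem [f1 Hf1]] : exists z, root f z.
  by apply/closed_rootP; rewrite neq_ltn Hs1 orbT.
have Xz0 : forall w : C, 'X - w%:P != 0 by move=> w; rewrite polyXsubC_eq0.
have r1 : root f1 (z^*).
  case: (boolP (z \is Num.real)) => zr; last first.
    have : root f (z^*) by rewrite rootE -fc conjp_horner (rootP (_ : root f z)) ?conjC0 // Hf1 rootM root_XsubC eqxx orbT.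
    rewrite Hf1 rootM root_XsubC; case/orP => // /eqP zz.
    by move: zr; rewrite CrealE zz eqxx.
  rewrite (conj_Creal zr); apply/rootP/eqP; apply/negP => a0.
  have f1c : conjp f1 = f1.
    apply: (mulIf (Xz0 z)); rewrite -Hf1 -fc Hf1 conjpM conjpXsubC (conj_Creal zr) //.
  have f1r : forall y, y \is Num.real -> f1.[y] \is Num.real.
    by move=> y yr; rewrite CrealE -conjp_hornerR // f1c.
  have ar := f1r _ zr.
  have na : 0 < `|f1.[z]| by rewrite normr_gt0; apply/negP.
  have [t0 [t00 Ht]] := poly_cont f1 z _ na.
  have Ht' : forall t, f.[z + t] = f1.[z + t] * t.
    by move=> t; rewrite Hf1 hornerM hornerXsubC addrAC subrr add0r.
  have t0r : t0 \is Num.real by rewrite gtr0_real.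
  have : f1.[z] != 0 by apply/negP.
  rewrite real_neqr_lt ?real0 // => /orP [an|ap].
    have := Ht t0; rewrite gtr0_norm // lexx => /(_ isT) H1.
    have := real_ltr_normlW (rpredB (f1r _ (rpredD zr t0r)) ar) H1.
    rewrite ltr0_norm // ltrBlDr addNr => H2.
    have := Hf _ (rpredD zr t0r); rewrite Ht' pmulr_lge0 // => H3.
    by have := le_lt_trans H3 H2; rewrite ltxx.
  have := Ht (- t0); rewrite normrN gtr0_norm // lexx => /(_ isT) H1.
  rewrite distrC in H1.
  have := real_ltr_normlW (rpredB ar (f1r _ (rpredB zr t0r))) H1.
  rewrite gtr0_norm // ltrBlDr ltrDl => H2.
  have := Hf _ (rpredB zr t0r); rewrite Ht' nmulr_lge0 ?oppr_lt0 // => H3.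
  by have := lt_le_trans H2 H3; rewrite ltxx.
case/factor_theorem: r1 => f2 Hf2.
have f20 : f2 != 0 by apply: contraNneq f0 => e; rewrite Hf1 Hf2 e !mul0r.
have Hsz : size f = (size f2).+2.
  by rewrite Hf1 Hf2 !size_mul ?mulf_neq0 // !size_XsubC !addn2.
have Hf2n : forall y, y \is Num.real -> ('X - z%:P).[y] != 0 -> 0 <= f2.[y].
  move=> y yr; rewrite hornerXsubC => yz.
  have := Hf y yr; rewrite Hf1 Hf2 !hornerM !hornerXsubC -mulrA.
  have -> : (y - z^*) * (y - z) = `|y - z| ^+ 2.
    by rewrite normCK rmorphB /= (conj_Creal yr) mulrC.
  by rewrite pmulr_lge0 // exprn_gt0 // normr_gt0.
have Hs2 : (size f2 <= n)%N by move: Hs; rewrite Hsz => /ltnW.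
have [g2 Hg2] := IH f2 Hs2 (@ext_nonneg _ _ f2 (Xz0 z) Hf2n).
exists (g2 * ('X - z%:P)).
rewrite conjpM conjpXsubC Hf1 Hf2 Hg2.
rewrite -!mulrA; congr (_ * _); rewrite [RHS]mulrCA; congr (_ * _); exact: mulrC.
Qed.

Definition PX {C : numClosedFieldType} (e : bool) (u : {poly C}) : {poly C} :=
  'X^e * (u \Po 'X^2).

Lemma conjpPX {C : numClosedFieldType} e (u : {poly C}) : conjp (PX e u) = PX e (conjp u).
Proof. by rewrite /PX conjpM conjpXn conjp_comp conjpXn. Qed.

Lemma PX_val {C : numClosedFieldType} e (u : {poly C}) x :
  (PX e u).[x] * (conjp (PX e u)).[x] = (x ^+ 2) ^+ e * (u.[x ^+ 2] * (conjp u).[x ^+ 2]).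
Proof.
rewrite conjpPX /PX !hornerM !hornerXn !horner_comp !hornerXn.
by rewrite mulrACA -exprMn -expr2 exprAC.
Qed.

Lemma norm_val {C : numClosedFieldType} (u : {poly C}) y : y \is Num.real ->
  u.[y] * (conjp u).[y] = `|u.[y]| ^+ 2.
Proof. by move=> yr; rewrite conjp_hornerR // normCK. Qed.

Lemma PX_norm {C : numClosedFieldType} e (u : {poly C}) :
  PX e u * conjp (PX e u) = ('X^e * (u * conjp u)) \Po 'X^2.
Proof.
rewrite conjpPX /PX !comp_polyM comp_Xn_poly -exprM mulnC exprM expr2.
by rewrite mulrACA.
Qed.

Lemma PX_identity {C : numClosedFieldType} (e : bool) (u v : {poly C}) :
  'X^e * (u * conjp u) + (1 - 'X) * ('X^(~~ e) * (v * conjp v)) = 1 ->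
  PX e u * conjp (PX e u) + (1 - 'X^2) * (PX (~~ e) v * conjp (PX (~~ e) v)) = 1.
Proof.
move=> H; rewrite !PX_norm.
have := congr1 (fun p => p \Po 'X^2) H => /=.
have c1 : (1 : {poly C}) \Po 'X^2 = 1 by rewrite -polyC1 comp_polyC.
by rewrite comp_polyD !comp_polyM comp_polyB comp_polyX c1.
Qed.

Lemma has_parityE {C : numClosedFieldType} (P : {poly C}) (z : int) :
  has_parity P z <-> forall j, odd j != odd `|z|%N -> P`_j = 0.
Proof.
rewrite /has_parity /odd_poly_p /even_poly_p; case: (odd _) => /=; split => H j;
  case Ej: (odd j) => //= _; apply: H; by rewrite Ej.
Qed.

Lemma PX_parity {C : numClosedFieldType} (e : bool) (u : {poly C}) (z : int) :
  odd `|z|%N = e -> has_parity (PX e u) z.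
Proof.
move=> ez; apply/has_parityE => j; rewrite ez /PX coefXnM.
case: ifP => // Hj Hne; rewrite coef_comp_poly_Xn // dvdn2.
rewrite oddB; last by rewrite leqNgt Hj.
by case: e Hne {ez Hj} => /=; case: (odd j).
Qed.

Lemma PX_decomp {C : numClosedFieldType} (P : {poly C}) (z : int) :
  has_parity P z -> exists u, P = PX (odd `|z|%N) u.
Proof.
move=> /has_parityE H; case E: (odd `|z|%N).
  have E0 : even_poly P = 0.
    by apply/polyP => i; rewrite coef_even_poly coef0 H // odd_double E.
  exists (odd_poly P); rewrite /PX expr1 mulrC.
  by rewrite -[in LHS](poly_even_odd P) E0 comp_poly0 add0r.
have E0 : odd_poly P = 0.
  by apply/polyP => i; rewrite coef_odd_poly coef0 H // oddS odd_double E.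
exists (even_poly P); rewrite /PX expr0 mul1r.
by rewrite -[in LHS](poly_even_odd P) E0 comp_poly0 mul0r addr0.
Qed.

Lemma odd_km1 (k : nat) : odd `|(k%:Z - 1)|%N = ~~ odd k.
Proof.
case: k => [//|k]; have -> : (k.+1%:Z - 1) = k%:Z by rewrite -addn1 PoszD addrK.
by rewrite absz_nat /= negbK.
Qed.

Definition Iden {C : numClosedFieldType} (P Q : {poly C}) :=
  P * conjp P + (1 - 'X^2) * (Q * conjp Q) = 1.

Lemma Iden_point {C : numClosedFieldType} (P Q : {poly C}) x : Iden P Q ->
  P.[x] * (conjp P).[x] + (1 - x ^+ 2) * (Q.[x] * (conjp Q).[x]) = 1.
Proof.
move=> H; have := congr1 (fun p => p.[x]) H => /=.
by rewrite hornerD !hornerM hornerD hornerN hornerXn !hornerC.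
Qed.

Lemma pointwise_Iden {C : numClosedFieldType} (P Q : {poly C}) :
  (forall x : C, x \is Num.real -> -1 <= x <= 1 ->
        `|P.[x]| ^+ 2 + (1 - x ^+ 2) * `|Q.[x]| ^+ 2 = 1) -> Iden P Q.
Proof.
move=> H; apply/eqP; rewrite -subr_eq0; apply/eqP; apply: poly_zero_inv => n.
have xr := @inv_real C n.
have x0 : 0 <= (n.+1%:R : C)^-1 by rewrite invr_ge0 ler0n.
have x1 : (n.+1%:R : C)^-1 <= 1 by rewrite invf_le1 ?ltr0n // ler1n.
rewrite !(hornerD, hornerN, hornerM, hornerXn, hornerC, hornerX) -expr2.
by rewrite !norm_val // H ?subrr // x1 andbT (le_trans _ x0) // oppr_le0 ler01.
Qed.

Lemma size_1subX2 {C : numClosedFieldType} : size (1 - 'X^2 : {poly C}) = 3%N.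
Proof. by rewrite -opprB size_opp -polyC1 size_XnsubC. Qed.

Lemma size_nconj {C : numClosedFieldType} (p : {poly C}) : p != 0 ->
  size (p * conjp p) = (size p + size p).-1.
Proof.
move=> p0; rewrite size_mul ?size_conjp //.
by rewrite -size_poly_eq0 size_conjp size_poly_eq0.
Qed.

Lemma size_nconj_le {C : numClosedFieldType} (p : {poly C}) :
  (size (p * conjp p)%R <= (size p + size p).-1)%N.
Proof. by apply: leq_trans (size_mul_leq _ _) _; rewrite size_conjp. Qed.

Lemma Iden_sizeQ {C : numClosedFieldType} (P Q : {poly C}) k : Iden P Q ->
  (size P <= k.+1)%N -> (size Q <= k)%N.
Proof.
move=> H HP; rewrite /Iden in H; case: (eqVneq Q 0) => [->|Q0]; first by rewrite size_poly0.
have E : (1 - 'X^2) * (Q * conjp Q) = 1 - P * conjp P.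
  by apply/eqP; rewrite eq_sym subr_eq eq_sym addrC H.
have := congr1 (fun p : {poly C} => size p) E => /=; rewrite size_mul ?size_nconj ?mulf_neq0 //; last first.
  - by rewrite -size_poly_eq0 size_conjp size_poly_eq0.
  - by rewrite -size_poly_eq0 size_1subX2.
rewrite size_1subX2 => E2.
have := size_polyD 1 (- (P * conjp P)); rewrite size_opp -E2 size_poly1.
have := size_nconj_le P; have := size_poly_gt0 Q.
rewrite Q0 /= => h1 h2 h3.
have : (2 + (size Q + size Q).-1 <= maxn 1 ((size P + size P).-1))%N.
  by apply: leq_trans h3 _; rewrite geq_max leq_maxl /= (leq_trans h2) // leq_maxr.
move=> h4; move: h4 HP h1; move: (size P) (size Q) => a b. clear; lia.
Qed.

Lemma Iden_sizeP {C : numClosedFieldType} (P Q : {poly C}) k : Iden P Q ->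
  (size Q <= k)%N -> (size P <= k.+1)%N.
Proof.
move=> H HQ; rewrite /Iden in H; case: (eqVneq P 0) => [->|P0]; first by rewrite size_poly0.
have E : P * conjp P = 1 - (1 - 'X^2) * (Q * conjp Q).
  by apply/eqP; rewrite eq_sym subr_eq eq_sym H.
have := congr1 (fun p : {poly C} => size p) E => /=; rewrite size_nconj // => E2.
have := size_polyD 1 (- ((1 - 'X^2) * (Q * conjp Q))); rewrite size_opp -E2 size_poly1.
have := size_mul_leq (1 - 'X^2) (Q * conjp Q); rewrite size_1subX2.
have := size_nconj_le Q; have := size_poly_gt0 P.
rewrite P0 /= => h1 h2 h3 h4.
case: (eqVneq Q 0) => [Qz|Q0].
  move: h4; rewrite Qz mul0r mulr0 size_poly0 => h4; move: h4 h1.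
  by move: (size P) => a; clear; lia.
move: h2 h3 h4 h1 HQ.
move: (size (Q * conjp Q)) (size ((1 - 'X^2) * (Q * conjp Q))) (size P) (size Q).
by move=> r s a b; clear; lia.
Qed.

Lemma iX_sq {C : numClosedFieldType} (x : C) : ('i * x) ^+ 2 = - x ^+ 2.
Proof. by rewrite exprMn sqrCi mulN1r. Qed.

Lemma real_sq_le1 {C : numClosedFieldType} (x : C) : x \is Num.real ->
  -1 <= x <= 1 -> x ^+ 2 <= 1.
Proof.
move=> xr hx; rewrite -real_normK // exprn_ile1 //.
by rewrite real_ler_norml.
Qed.

Lemma real_sq_ge1 {C : numClosedFieldType} (x : C) : x \is Num.real ->
  1 <= `|x| -> 1 <= x ^+ 2.
Proof. by move=> xr hx; rewrite -real_normK // exprn_ege1. Qed.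

Lemma a_nec {C : numClosedFieldType} (k : nat) (P Q : {poly C}) : QSP_cond k P Q ->
     [/\ (size P <= k.+1)%N,
         has_parity P k%:Z,
         (forall x : C, x \is Num.real -> -1 <= x <= 1 -> `|P.[x]| <= 1),
         (forall x : C, x \is Num.real -> 1 <= `|x| -> 1 <= `|P.[x]|)
       & (~~ odd k -> forall x : C, x \is Num.real ->
            1 <= P.['i * x] * (conjp P).['i * x])].
Proof.
case=> [[sP sQ] [pP pQ] H]; have I := pointwise_Iden _ _ H.
split => //.
- move=> x xr hx; rewrite -(@expr_le1 _ 2) //.
  rewrite -[X in _ <= X](H x xr hx) lerDl mulr_ge0 ?exprn_ge0 //.
  by rewrite subr_ge0 real_sq_le1.
- move=> x xr hx; rewrite -(@expr_ge1 _ 2) //.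
  have := Iden_point _ _ x I; rewrite !norm_val // => E.
  rewrite -[X in X <= _]E gerDl mulr_le0_ge0 ?exprn_ge0 //.
  by rewrite subr_le0 real_sq_ge1.
- move=> hk x xr.
  have [v Hv] := PX_decomp _ _ pQ; rewrite odd_km1 hk in Hv.
  have := Iden_point _ _ ('i * x) I; rewrite Hv PX_val iX_sq.
  have yr : - x ^+ 2 \is Num.real by rewrite rpredN rpredX.
  rewrite [v.[_] * _]norm_val // /= expr1 => E.
  rewrite -[X in X <= _]E gerDl mulr_ge0_le0 //.
    by rewrite opprK addr_ge0 // -realEsqr.
  by rewrite mulr_le0_ge0 ?exprn_ge0 // oppr_le0 -realEsqr.
Qed.

Lemma b_nec {C : numClosedFieldType} (k : nat) (P Q : {poly C}) : QSP_cond k P Q ->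
     [/\ (size Q <= k)%N,
         has_parity Q (k%:Z - 1),
         (forall x : C, x \is Num.real -> -1 <= x <= 1 ->
            sqrtC (1 - x ^+ 2) * `|Q.[x]| <= 1)
       & (odd k -> forall x : C, x \is Num.real ->
            1 <= (1 + x ^+ 2) * (Q.['i * x] * (conjp Q).['i * x]))].
Proof.
case=> [[sP sQ] [pP pQ] H]; have I := pointwise_Iden _ _ H.
split => //.
- move=> x xr hx.
  have s0 : 0 <= 1 - x ^+ 2 by rewrite subr_ge0 real_sq_le1.
  rewrite -(@expr_le1 _ 2) ?mulr_ge0 ?sqrtC_ge0 //.
  by rewrite exprMn sqrtCK -[X in _ <= X](H x xr hx) lerDr exprn_ge0.
- move=> hk x xr.
  have [u Hu] := PX_decomp _ _ pP; rewrite absz_nat hk in Hu.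
  have := Iden_point _ _ ('i * x) I; rewrite Hu PX_val iX_sq.
  have yr : - x ^+ 2 \is Num.real by rewrite rpredN rpredX.
  rewrite [u.[_] * _]norm_val // /= expr1 opprK => E.
  by rewrite -[X in X <= _]E gerDr mulr_le0_ge0 ?exprn_ge0 // oppr_le0 -realEsqr.
Qed.

Lemma Iden_QSP {C : numClosedFieldType} k (P Q : {poly C}) : Iden P Q ->
  (size P <= k.+1)%N -> (size Q <= k)%N -> has_parity P k -> has_parity Q (k%:Z - 1) ->
  QSP_cond k P Q.
Proof.
move=> I sP sQ pP pQ; split => // x xr _.
by have := Iden_point _ _ x I; rewrite !norm_val.
Qed.

Lemma FRb {C : numClosedFieldType} (b B : {poly C}) : b != 0 ->
  (forall y, y \is Num.real -> b.[y] != 0 -> 0 <= B.[y]) ->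
  exists v, B = v * conjp v.
Proof. by move=> b0 H; apply: FR; exact: (ext_nonneg _ _ b0 H). Qed.

Lemma sgn_step {C : numClosedFieldType} (b d B : C) : d = b * B ->
  (0 < b /\ 0 <= d) \/ (b < 0 /\ d <= 0) -> 0 <= B.
Proof.
move=> -> [[b0 d0]|[b0 d0]]; first by rewrite -(pmulr_rge0 _ b0).
by rewrite -(nmulr_rle0 _ b0).
Qed.

Lemma sqrt_facts {C : numClosedFieldType} (y : C) : 0 <= y ->
  [/\ sqrtC y \is Num.real, 0 <= sqrtC y & sqrtC y ^+ 2 = y].
Proof. by move=> y0; rewrite sqrtCK sqrtC_ge0 y0 sqrtC_real. Qed.

Lemma a_suff {C : numClosedFieldType} (k : nat) (P : {poly C}) :
     (size P <= k.+1)%N -> has_parity P k%:Z ->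
     (forall x : C, x \is Num.real -> -1 <= x <= 1 -> `|P.[x]| <= 1) ->
     (forall x : C, x \is Num.real -> 1 <= `|x| -> 1 <= `|P.[x]|) ->
     (~~ odd k -> forall x : C, x \is Num.real ->
            1 <= P.['i * x] * (conjp P).['i * x]) ->
  exists Q, QSP_cond k P Q.
Proof.
move=> sP pP hA hB hC.
have [u Hu] := PX_decomp _ _ pP; rewrite absz_nat in Hu.
have Pv : forall x, P.[x] * (conjp P).[x] =
    (x ^+ 2) ^+ odd k * (u.[x ^+ 2] * (conjp u).[x ^+ 2]).
  by move=> x; rewrite Hu PX_val.
set D := 1 - 'X^(odd k) * (u * conjp u).
have Dv : forall y, D.[y] = 1 - y ^+ odd k * (u.[y] * (conjp u).[y]).
  by move=> y; rewrite /D !(hornerD, hornerN, hornerM, hornerXn, hornerC).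
have P1 : P.[1] * (conjp P).[1] = 1.
  have n1 : `|P.[1]| = 1.
    apply/le_anti; rewrite hA ?hB ?real1 ?normr1 ?lexx //.
    by rewrite andbT (le_trans (lerN10 _) ler01).
  by rewrite norm_val ?real1 // n1 expr1n.
have D1 : root D 1.
  have := Pv 1; rewrite !expr1n mul1r P1 => E.
  by rewrite rootE Dv expr1n mul1r -E subrr.
case/factor_theorem: D1 => D1p HD1.
set b := (1 - 'X) * 'X^(~~ odd k) : {poly C}.
have w0 : forall y, y \is Num.real -> 0 <= u.[y] * (conjp u).[y].
  by move=> y yr; rewrite norm_val // exprn_ge0.
have [B HB] : exists B, D = b * B.
  rewrite /b; case Ek: (odd k) => /=.
    by exists (- D1p); rewrite HD1 polyC1 expr0; ring.
  have P0 : P.[0] * (conjp P).[0] = 1.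
    have h0 := hC (negbT Ek) 0 (real0 _); rewrite mulr0 in h0.
    apply/le_anti; rewrite h0 andbT.
    rewrite norm_val ?real0 // exprn_ile1 // hA ?real0 //.
    by rewrite ler01 lerN10.
  have : root D1p 0.
    have := Pv 0; rewrite Ek expr0n /= expr0 mul1r P0 => E.
    have := Dv 0; rewrite Ek expr0 mul1r -E subrr HD1 hornerM hornerXsubC sub0r.
    by rewrite mulrN1 => /eqP; rewrite oppr_eq0.
  case/factor_theorem => D2 HD2.
  by exists (- D2); rewrite HD1 HD2 polyC1 polyC0 expr1; ring.
have b0 : b != 0.
  by rewrite mulf_neq0 ?expf_neq0 ?polyX_eq0 // -opprB oppr_eq0 -polyC1 polyXsubC_eq0.
have Hpos : forall y, y \is Num.real -> b.[y] != 0 -> 0 <= B.[y].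
  move=> y yr by0.
  have Hb : b.[y] = (1 - y) * y ^+ (~~ odd k).
    by rewrite /b !(hornerD, hornerN, hornerM, hornerXn, hornerC, hornerX).
  apply: (@sgn_step _ b.[y] D.[y] B.[y]); first by rewrite HB hornerM.
  rewrite Hb Dv; have wy := w0 y yr.
  move: wy; set w := u.[y] * (conjp u).[y] => wy.
  rewrite Hb in by0.
  case: (real_ltgtP yr (real0 _)) => [yn|yp|y0].
  - have y1 : 0 < 1 - y by rewrite subr_gt0 (lt_trans yn ltr01).
    case Ek: (odd k) => /=.
      left; rewrite expr0 mulr1 expr1 y1; split => //.
      by rewrite subr_ge0 (le_trans _ ler01) // mulr_le0_ge0 // ltW.
    right; rewrite expr0 mul1r expr1 pmulr_rlt0 // yn; split => //.
    rewrite subr_le0.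
    have ny : 0 < - y by rewrite oppr_gt0.
    have [xr x0 xy] := sqrt_facts _ (ltW ny).
    have := hC (negbT Ek) _ xr; rewrite Pv iX_sq xy opprK Ek expr0 mul1r //.
  - have [xr x0 xy] := sqrt_facts _ (ltW yp).
    have Px : y ^+ odd k * w = `|P.[sqrtC y]| ^+ 2 by rewrite -norm_val // Pv xy.
    rewrite Px.
    case: (real_ltgtP yr (real1 _)) => [y1|y1|y1].
    + left; split; first by rewrite mulr_gt0 ?subr_gt0 ?exprn_gt0.
      rewrite subr_ge0 exprn_ile1 ?normr_ge0 // hA // (le_trans (lerN10 _) x0) /=.
      by rewrite -(@expr_le1 _ 2) // xy ltW.
    + right; split; first by rewrite nmulr_rlt0 ?subr_lt0 ?exprn_gt0.
      rewrite subr_le0 exprn_ege1 // hB // ger0_norm //.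
      by rewrite -(@expr_ge1 _ 2) // xy ltW.
    + by rewrite y1 subrr mul0r eqxx in by0.
  - by rewrite y0 in by0 *; case: (odd k) by0 => /=; rewrite ?expr0 ?expr1 ?mulr0 ?eqxx //; left; rewrite mulr1 subr0 mul0r subr0 ler01 ltr01.
have [v Hv] := FRb _ _ b0 Hpos.
have I : Iden P (PX (~~ odd k) v).
  rewrite Hu /Iden; apply: PX_identity.
  by rewrite -Hv [(1 - 'X) * _]mulrA -/b -HB /D addrC subrK.
exists (PX (~~ odd k) v); apply: Iden_QSP => //.
  exact: (Iden_sizeQ _ _ _ I sP).
by apply: PX_parity; rewrite odd_km1.
Qed.

Lemma b_suff {C : numClosedFieldType} (k : nat) (Q : {poly C}) :
     (size Q <= k)%N -> has_parity Q (k%:Z - 1) ->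
     (forall x : C, x \is Num.real -> -1 <= x <= 1 ->
            sqrtC (1 - x ^+ 2) * `|Q.[x]| <= 1) ->
     (odd k -> forall x : C, x \is Num.real ->
            1 <= (1 + x ^+ 2) * (Q.['i * x] * (conjp Q).['i * x])) ->
  exists P, QSP_cond k P Q.
Proof.
move=> sQ pQ hA hB.
have [v Hv] := PX_decomp _ _ pQ; rewrite odd_km1 in Hv.
have Qv : forall x, Q.[x] * (conjp Q).[x] =
    (x ^+ 2) ^+ (~~ odd k) * (v.[x ^+ 2] * (conjp v).[x ^+ 2]).
  by move=> x; rewrite Hv PX_val.
set D := 1 - (1 - 'X) * ('X^(~~ odd k) * (v * conjp v)).
have Dv : forall y, D.[y] = 1 - (1 - y) * (y ^+ (~~ odd k) * (v.[y] * (conjp v).[y])).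
  by move=> y; rewrite /D !(hornerD, hornerN, hornerM, hornerXn, hornerC, hornerX).
set b := 'X^(odd k) : {poly C}.
have w0 : forall y, y \is Num.real -> 0 <= v.[y] * (conjp v).[y].
  by move=> y yr; rewrite norm_val // exprn_ge0.
have [B HB] : exists B, D = b * B.
  rewrite /b; case Ek: (odd k) => /=; last by exists D; rewrite expr0 mul1r.
  have Q0 : Q.[0] * (conjp Q).[0] = 1.
    have h0 := hB Ek 0 (real0 _); rewrite mulr0 expr0n addr0 mul1r in h0.
    apply/le_anti; rewrite h0 andbT.
    rewrite norm_val ?real0 // exprn_ile1 //.
    have := hA 0 (real0 _); rewrite expr0n subr0 sqrtC1 mul1r; apply.
    by rewrite lerN10 ler01.
  have : root D 0.
    have := Qv 0; rewrite Ek expr0n /= expr0 mul1r Q0 => E.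
    by rewrite rootE Dv Ek expr0 mul1r subr0 mul1r -E subrr.
  case/factor_theorem => D2 HD2.
  by exists D2; rewrite HD2 polyC0 subr0 expr1 mulrC.
have b0 : b != 0 by rewrite expf_neq0 ?polyX_eq0.
have Hpos : forall y, y \is Num.real -> b.[y] != 0 -> 0 <= B.[y].
  move=> y yr by0.
  have Hb : b.[y] = y ^+ (odd k) by rewrite /b hornerXn.
  apply: (@sgn_step _ b.[y] D.[y] B.[y]); first by rewrite HB hornerM.
  rewrite Hb Dv; have wy := w0 y yr.
  move: wy; set w := v.[y] * (conjp v).[y] => wy.
  rewrite Hb in by0.
  case: (real_ltgtP yr (real0 _)) => [yn|yp|y0].
  - have y1 : 0 < 1 - y by rewrite subr_gt0 (lt_trans yn ltr01).
    case Ek: (odd k) => /=.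
      right; rewrite expr0 mul1r expr1 yn; split => //.
      rewrite subr_le0.
      have ny : 0 < - y by rewrite oppr_gt0.
      have [xr x0 xy] := sqrt_facts _ (ltW ny).
      have := hB Ek _ xr; rewrite Qv iX_sq xy opprK Ek expr0 mul1r //.
    left; rewrite expr0 expr1 ltr01; split => //.
    rewrite subr_ge0; apply: (le_trans _ ler01); apply: mulr_ge0_le0; first exact: ltW.
    exact: mulr_le0_ge0 (ltW yn) wy.
  - left; rewrite exprn_gt0 //; split => //.
    have [xr x0 xy] := sqrt_facts _ (ltW yp).
    have Qx : y ^+ (~~ odd k) * w = `|Q.[sqrtC y]| ^+ 2 by rewrite -norm_val // Qv xy.
    rewrite Qx subr_ge0.
    case: (real_ltgtP yr (real1 _)) => [y1|y1|y1].
    + have xle : sqrtC y <= 1 by rewrite -(@expr_le1 _ 2) // xy ltW.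
      have hx : -1 <= sqrtC y <= 1 by rewrite xle (le_trans (lerN10 _) x0).
      have h := hA _ xr hx; rewrite xy in h.
      have h2 : (sqrtC (1 - y) * `|Q.[sqrtC y]|) ^+ 2 <= 1.
        by rewrite exprn_ile1 ?mulr_ge0 ?sqrtC_ge0 // subr_ge0 ltW.
      by rewrite exprMn sqrtCK in h2.
    + rewrite (le_trans _ ler01) // mulr_le0_ge0 ?exprn_ge0 //.
      by rewrite subr_le0 ltW.
    + by rewrite y1 subrr mul0r ler01.
  - by rewrite y0 in by0 *; case: (odd k) by0 => /=; rewrite ?expr0 ?expr1 ?eqxx //; left; rewrite ltr01 subr0 mul0r mulr0 subr0 ler01.
have [u Hu] := FRb _ _ b0 Hpos.
have I : Iden (PX (odd k) u) Q.
  rewrite Hv /Iden; apply: PX_identity.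
  by rewrite -Hu -HB /D subrK.
exists (PX (odd k) u); apply: Iden_QSP => //.
  exact: (Iden_sizeP _ _ _ I sQ).
by apply: PX_parity; rewrite absz_nat.
Qed.

Theorem mainTheorem2 (C : numClosedFieldType) (k : nat) :
  (forall P : {poly C},
     (exists Q : {poly C}, QSP_cond k P Q) <->
     [/\ (size P <= k.+1)%N,
         has_parity P k%:Z,
         (forall x : C, x \is Num.real -> -1 <= x <= 1 -> `|P.[x]| <= 1),
         (forall x : C, x \is Num.real -> 1 <= `|x| -> 1 <= `|P.[x]|)
       & (~~ odd k -> forall x : C, x \is Num.real ->
            1 <= P.['i * x] * (conjp P).['i * x])])
  /\
  (forall Q : {poly C},
     (exists P : {poly C}, QSP_cond k P Q) <->
     [/\ (size Q <= k)%N,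
         has_parity Q (k%:Z - 1),
         (forall x : C, x \is Num.real -> -1 <= x <= 1 ->
            sqrtC (1 - x ^+ 2) * `|Q.[x]| <= 1)
       & (odd k -> forall x : C, x \is Num.real ->
            1 <= (1 + x ^+ 2) * (Q.['i * x] * (conjp Q).['i * x]))]).
Proof.
split => [P|Q]; split.
- by case=> Q H; apply: a_nec H.
- by case=> sP pP hA hB hC; apply: a_suff.
- by case=> P H; apply: b_nec H.
- by case=> sQ pQ hA hB; apply: b_suff.
Qed.
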